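(* Let $\mathcal M$ be a smooth manifold on which the group $\mathbb{R}^p$ acts (smoothly). Assume that some full lattice $\Gamma$ of $\mathbb{R}^p$ acts freely and properly on $\mathcal M$ (via the restricted action). Then $\mathbb{R}^p$ acts freely on $\mathcal M$.
   Context: A full lattice of $\mathbb{R}^p$ is a discrete subgroup $\Gamma$ with $\mathbb{R}^p/\Gamma$ compact. *)

(* Defs.v *)
From HB Require Import structures.
From mathcomp Require Import all_boot all_order all_algebra generic_quotient.
From mathcomp Require Import all_classical all_reals all_analysis.
Set Implicit Arguments. Unset Strict Implicit. Unset Printing Implicit Defensive.
Import Order.TTheory GRing.Theory Num.Theory.
Import numFieldNormedType.Exports.
Local Open Scope classical_set_scope.
Local Open Scope ring_scope.

Section Lattice.
Variables (R : realType) (p : nat) (G : set 'rV[R]_p).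

Definition is_addsubgroup : Prop :=
  G 0 /\ forall x y, G x -> G y -> G (x - y).

Definition is_discrete_subset : Prop :=
  forall g, G g -> exists2 U : set 'rV[R]_p, nbhs g U & U `&` G = [set g].

(* congruence modulo the subgroup generated by G (equal to "u - v \in G"
   when G is a subgroup) *)
Definition lat_rel (u v : 'rV[R]_p) : bool :=
  `[< forall H : set 'rV[R]_p, G `<=` H -> H 0 ->
        (forall x y, H x -> H y -> H (x - y)) -> H (u - v) >].

Lemma lat_rel_refl : reflexive lat_rel.
Proof. move=> u; apply/asboolP => H _ H0 _; by rewrite subrr. Qed.

Lemma lat_rel_sym : symmetric lat_rel.
Proof.
move=> u v; apply/asboolP/asboolP => h H GH H0 Hs;
  have := Hs _ _ H0 (h H GH H0 Hs); by rewrite sub0r opprB.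
Qed.

Lemma lat_rel_trans : transitive lat_rel.
Proof.
move=> v u w /asboolP h1 /asboolP h2; apply/asboolP => H GH H0 Hs.
have a := h1 H GH H0 Hs; have b := h2 H GH H0 Hs.
have c := Hs _ _ H0 b.
have := Hs _ _ a c.
by rewrite sub0r opprK addrA subrK.
Qed.

Canonical lat_equiv := EquivRel lat_rel lat_rel_refl lat_rel_sym lat_rel_trans.

Definition lat_quotient := quotient_topology ({eq_quot lat_equiv})%qT.

Definition full_lattice : Prop :=
  [/\ is_addsubgroup, is_discrete_subset & compact [set: lat_quotient]].
End Lattice.

Section Action.
Variables (R : realType) (p : nat) (M : topologicalType)
  (act : 'rV[R]_p -> M -> M).

Definition is_cont_action : Prop :=
  [/\ forall x, act 0 x = x,
      forall u v x, act (u + v) x = act u (act v x) &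
      continuous (fun z : 'rV[R]_p * M => act z.1 z.2)].

Definition acts_freely (G : set 'rV[R]_p) : Prop :=
  forall g x, G g -> act g x = x -> g = 0.

(* proper action of G (with the subspace topology): the map
   G x M -> M x M, (g, x) |-> (g.x, x) is proper, i.e. preimages of
   compact sets are compact *)
Definition acts_properly (G : set 'rV[R]_p) : Prop :=
  forall K : set (M * M), compact K ->
    compact [set z : 'rV[R]_p * M | G z.1 /\ K (act z.1 z.2, z.2)].
End Action.

(* Main.v *)
Set Warnings "-all".
Require Import Defs.
From HB Require Import structures.
From mathcomp Require Import all_boot all_order all_algebra generic_quotient.
From mathcomp Require Import all_classical all_reals all_analysis.
Import Order.TTheory GRing.Theory Num.Theory.
Import numFieldNormedType.Exports.
Local Open Scope classical_set_scope.
Local Open Scope ring_scope.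
Local Open Scope quotient_scope.

Lemma cocompact_bound (R : realType) (p : nat) (G : set 'rV[R]_p) :
  full_lattice G -> exists B : R, forall v, exists g, G g /\ `|v - g| <= B.
Proof.
case=> [[G0 Gsub] _ Qc].
rewrite compact_cover in Qc.
pose Q := lat_quotient G.
pose f (v : 'rV[R]_p) : set Q := [set q | exists z, ball v 1 z /\ q = \pi_Q z].
have [D' _ cov] : finite_subset_cover setT f setT.
  apply: Qc.
  - move=> v _.
    rewrite /open /= /quotient_open openE => w [z [bz ez]].
    apply/nbhs_ballP; exists (1 - `|v - z|).
      by rewrite /= subr_gt0; move: bz; rewrite -ball_normE.
    move=> w' bw'; exists (z + (w' - w)); split.
      move: bz bw'; rewrite -!ball_normE /ball_ /= => bz bw'.
      have : `|v - (z + (w' - w))| <= `|v - z| + `|w - w'|.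
        have -> : v - (z + (w' - w)) = (v - z) + (w - w') by rewrite opprD opprB addrA.
        exact: ler_normD.
      move=> h; apply: le_lt_trans h _.
      by rewrite -ltrBrDl.
    apply/eqmodP => /=.
    have hwz : lat_rel G w z.
      apply/(@eqmodP _ (lat_equiv G)); exact: ez.
    rewrite /lat_rel.
    have -> : w' - (z + (w' - w)) = w - z.
      by rewrite opprD opprB addrA addrC addrA subrK.
    exact: hwz.
  - move=> q _; exists (repr q) => //; exists (repr q); split.
      exact: ballxx.
    by rewrite reprK.
exists (\sum_(i <- finmap.enum_fset D') `|i| + 1) => v.
have [i Di [z [bz ez]]] := cov (\pi_Q v) I.
have hvz : lat_rel G v z by apply/(@eqmodP _ (lat_equiv G)); exact: ez.
have Gvz : G (v - z).
  by move/asboolP: hvz; apply => //.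
exists (v - z); split => //.
have -> : v - (v - z) = z by rewrite opprB addrC subrK.
have hi : `|i| <= \sum_(j <- finmap.enum_fset D') `|j|.
  have : i \in finmap.enum_fset D' by [].
  elim: (finmap.enum_fset D') => [//|a s IH].
  rewrite inE big_cons => /orP[/eqP->|/IH h].
    by rewrite lerDl sumr_ge0.
  by apply: le_trans h _; rewrite lerDr.
move: bz; rewrite -ball_normE /ball_ /= => bz.
have : `|z| <= `|i| + `|i - z|.
  have {1}-> : z = i - (i - z) by rewrite opprB addrC subrK.
  exact: ler_normB.
move=> h; apply: (le_trans h); apply: lerD => //; exact: ltW.
Qed.

Theorem mainTheorem2 (R : realType) (p : nat) (M : topologicalType)
  (act : 'rV[R]_p -> M -> M) (Gamma : set 'rV[R]_p) :
  hausdorff_space M ->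
  is_cont_action act ->
  full_lattice Gamma ->
  acts_freely act Gamma ->
  acts_properly act Gamma ->
  acts_freely act [set: 'rV[R]_p].
Proof.
move=> _ [act0 actD actc] FL Gfree Gprop g x _ hx.
case: (eqVneq g 0) => // gn0; exfalso.
have [B HB] := @cocompact_bound _ _ _ FL.
pose B' := `|B| + 1.
have B'pos : 0 < B' by rewrite /B' ltr_pwDr.
pose C := closed_ball (0 : 'rV[R]_p) B'.
have Cc : compact C.
  apply: bounded_closed_compact; last exact: closed_ball_closed.
  exists B'; split; first by rewrite num_real.
  move=> N hN y; rewrite /C closed_ballE // /closed_ball_ /= sub0r normrN => hy.
  by apply: le_trans hy (ltW hN).
have ca : continuous (fun c => act c x).
  move=> c.
  change ({for c, continuous ((fun z : 'rV[R]_p * M => act z.1 z.2) \o (fun c0 : 'rV[R]_p => (c0, x)))}).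
  apply: continuous_comp; last exact: actc.
  rewrite /prop_for /continuous_at; exact: (@cvg_pair _ _ _ (nbhs c) (nbhs c) (nbhs x) _ _ _ (fun c0 => c0) (fun=> x) cvg_id (cvg_cst x)).
pose K := (fun c => (act c x, x)) @` C.
have Kc : compact K.
  apply: continuous_compact => //; apply: continuous_subspaceT => c.
  rewrite /prop_for /continuous_at; exact: (@cvg_pair _ _ _ (nbhs c) (nbhs (act c x)) (nbhs x) _ _ _ (fun c0 => act c0 x) (fun=> x) (ca c) (cvg_cst x)).
have Tc := Gprop K Kc.
have Fc : compact (fst @` [set z : 'rV[R]_p * M | Gamma z.1 /\ K (act z.1 z.2, z.2)]).
  apply: continuous_compact => //; apply: continuous_subspaceT => z.
  exact: cvg_fst.
have [N0 [_ HN]] := compact_bounded Fc.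
have HN1 := HN (N0 + 1) (ltr_pwDr ltr01 (lexx N0)).
have {}HN1 : forall y, (fst @` [set z : 'rV[R]_p * M | Gamma z.1 /\ K (act z.1 z.2, z.2)]) y -> `|y| <= N0 + 1 by move=> y hy; exact: HN1.
have gn : forall n, act (g *+ n) x = x.
  elim=> [|n IH]; first by rewrite mulr0n act0.
  by rewrite mulrS actD IH hx.
have bnd : forall n, `|g| *+ n <= B + (N0 + 1).
  move=> n; have [c [Gc hc]] := HB (g *+ n).
  have Tc1 : `|c| <= N0 + 1.
    apply: (HN1 c); exists (c, x) => //; split => //=.
    exists (c - g *+ n).
      rewrite /C closed_ballE // /closed_ball_ /= sub0r normrN.
      apply: le_trans (ltW _); first by rewrite -normrN opprB; exact: hc.
      by rewrite /B' (le_lt_trans (ler_norm B)) // ltrDl.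
    by congr (_, _); rewrite -[in LHS](gn n) -actD subrK.
  rewrite -normrMn.
  have -> : g *+ n = (g *+ n - c) + c by rewrite subrK.
  by apply: le_trans (ler_normD _ _) _; apply: lerD.
have gpos : 0 < `|g| by rewrite normr_gt0.
pose X := `|B + (N0 + 1)| / `|g|.
have X0 : 0 <= X by rewrite /X divr_ge0.
have := archi_boundP X0.
rewrite /X ltr_pdivrMr // => h.
have := bnd (Num.Def.archi_bound X).
rewrite -mulr_natr mulrC => h2.
have := le_lt_trans (ler_norm _) h.
by move=> /(le_lt_trans h2); rewrite ltxx.
Qed.
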